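(* Let $\Delta:M_n\to M_n$ be a weak-2-local derivation, and let $p_1,\ldots,p_n$ be mutually orthogonal minimal projections in $M_n$ with $\Delta(p_k)=0$ for $1\le k\le n$. If $\Delta(p_1+e_{1j_0}-e_{i_01})=0$ for some $2\le i_0,j_0\le n$, then $\Delta(e_{i_0j_0})=0$.
   Context: $M_n=M_n(\mathbb{C})$. For $i,j$, $e_{ij}$ is the unique minimal partial isometry in $M_n$ with $e_{ij}^*e_{ij}=p_j$ and $e_{ij}e_{ij}^*=p_i$. A derivation on $M_n$ is a linear map $D$ with $D(ab)=D(a)b+aD(b)$. A (not necessarily linear) map $\Delta:M_n\to M_n$ is a weak-2-local derivation if for every $a,b\in M_n$ and every $\phi\in M_n^*$ there exists a derivation $D_{a,b,\phi}$ such that $\phi\Delta(a)=\phi D_{a,b,\phi}(a)$ and $\phi\Delta(b)=\phi D_{a,b,\phi}(b)$. *)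

(* Defs.v *)
From HB Require Import structures.
From mathcomp Require Import all_boot all_order all_algebra.
From mathcomp Require Import complex.
From mathcomp Require Import Rstruct.
From Stdlib Require Import Reals.
Set Implicit Arguments. Unset Strict Implicit. Unset Printing Implicit Defensive.
Import Order.TTheory GRing.Theory Num.Theory.
Local Open Scope ring_scope.

Definition C : numClosedFieldType := (Rdefinitions.R)[i].

Definition adjmx (m n : nat) (A : 'M[C]_(m, n)) : 'M[C]_(n, m) :=
  (map_mx (@Num.conj_op C) A)^T.

Definition is_projection (n : nat) (p : 'M[C]_n) : Prop :=
  p *m p = p /\ adjmx p = p.

Definition is_minimal_projection (n : nat) (p : 'M[C]_n) : Prop :=
  is_projection p /\ p <> 0 /\
  forall q : 'M[C]_n, is_projection q -> q *m p = q -> q = 0 \/ q = p.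

Definition is_linear_map (n : nat) (D : 'M[C]_n -> 'M[C]_n) : Prop :=
  forall (c : C) (x y : 'M[C]_n), D (c *: x + y) = c *: D x + D y.

Definition is_functional (n : nat) (phi : 'M[C]_n -> C) : Prop :=
  forall (c : C) (x y : 'M[C]_n), phi (c *: x + y) = c * phi x + phi y.

Definition is_derivation (n : nat) (D : 'M[C]_n -> 'M[C]_n) : Prop :=
  is_linear_map D /\ forall a b : 'M[C]_n, D (a *m b) = D a *m b + a *m D b.

Definition is_weak_2_local_derivation (n : nat) (Delta : 'M[C]_n -> 'M[C]_n) : Prop :=
  forall (a b : 'M[C]_n) (phi : 'M[C]_n -> C), is_functional phi ->
    exists D : 'M[C]_n -> 'M[C]_n, is_derivation D /\
      phi (Delta a) = phi (D a) /\ phi (Delta b) = phi (D b).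

(* Main.v *)
Require Import Defs.
From HB Require Import structures.
From mathcomp Require Import all_boot all_order all_algebra.
Import GRing.Theory Num.Theory.
Local Open Scope ring_scope.

Lemma adjmx_eq0 n (A : 'M[C]_n) : adjmx A *m A = 0 -> A = 0.
Proof.
move=> H; apply/matrixP=> i j.
have := congr1 (fun M : 'M[C]_n => M j j) H; rewrite !mxE => Hs.
have Hs' : \sum_k (Num.conj_op (A k j)) * A k j = 0.
  by rewrite -[RHS]Hs; apply: eq_bigr => k _; rewrite /adjmx !mxE.
have Hn : forall k, true -> 0 <= (Num.conj_op (A k j)) * A k j.
  by move=> k _; rewrite mulrC -normCK exprn_ge0.
have := psumr_eq0P Hn Hs'; move=> /(_ i isT).
by rewrite mulrC -normCK => /eqP; rewrite sqrf_eq0 normr_eq0 => /eqP.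
Qed.

Lemma adjmxM m n p (A : 'M[C]_(m,n)) (B : 'M[C]_(n,p)) :
  adjmx (A *m B) = adjmx B *m adjmx A.
Proof. by rewrite /adjmx map_mxM trmx_mul. Qed.

Lemma adjmxK m n (A : 'M[C]_(m,n)) : adjmx (adjmx A) = A.
Proof. by apply/matrixP=> i j; rewrite /adjmx !mxE conjCK. Qed.

Lemma adjmxB m n (A B : 'M[C]_(m,n)) : adjmx (A - B) = adjmx A - adjmx B.
Proof. by apply/matrixP=> i j; rewrite /adjmx !mxE rmorphB. Qed.

Lemma pi_lemma n (A P : 'M[C]_n) :
  adjmx A *m A = P -> P *m P = P -> A *m P = A.
Proof.
move=> HA HP.
have HPa : adjmx P = P by rewrite -HA adjmxM adjmxK.
apply/eqP; rewrite -subr_eq0; apply/eqP; apply: adjmx_eq0.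
rewrite adjmxB adjmxM HPa mulmxBl !mulmxBr !mulmxA HA -(mulmxA P (adjmx A)) HA.
by rewrite !HP !subrr ?subr0.
Qed.
Lemma key n (Delta : 'M[C]_n -> 'M[C]_n) (w q F V : 'M[C]_n) (lam : C) :
  is_weak_2_local_derivation Delta -> Delta q = 0 ->
  F *m (w - lam *: q) = 0 -> (w - lam *: q) *m V = 0 -> F *m Delta w *m V = 0.
Proof.
move=> W Hq HF HV; apply/matrixP=> i j.
pose phi := fun x : 'M[C]_n => (F *m x *m V) i j.
have Hphi : is_functional phi.
  by move=> c x y; rewrite /phi mulmxDr mulmxDl -scalemxAr -scalemxAl !mxE.
have [D [[Dlin Dleib] [h1 h2]]] := W w q phi Hphi.
have D0 : D 0 = 0.
  have := Dlin 1 0 0; rewrite scale1r addr0; move/eqP.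
  by rewrite eq_sym -subr_eq0 scale1r addrK => /eqP.
have DX : D (w - lam *: q) = D w - lam *: D q.
  have -> : w - lam *: q = (- lam) *: q + w by rewrite scaleNr addrC.
  by rewrite Dlin scaleNr addrC.
have HDXV : F *m D (w - lam *: q) *m V = 0.
  have := Dleib (w - lam *: q) V; rewrite HV D0; move/eqP; rewrite eq_sym addr_eq0 => /eqP E.
  by rewrite -mulmxA E mulmxN mulmxA HF mul0mx oppr0.
have Hq0 : phi (D q) = 0 by rewrite -h2 Hq /phi mulmx0 mul0mx mxE.
rewrite -/(phi _) h1 mxE.
have -> : D w = D (w - lam *: q) + lam *: D q by rewrite DX subrK.
by rewrite /phi mulmxDr mulmxDl HDXV add0r -scalemxAr -scalemxAl mxE -/(phi _) Hq0 mulr0.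
Qed.

Arguments pi_lemma {n A P}.

Lemma zL1 (V : zmodType) (a b : V) : a - b - a + b = 0.
Proof. by rewrite [a - b - a]addrAC subrr add0r addNr. Qed.
Lemma zL2 (V : zmodType) (a b : V) : - a - b + b + a = 0.
Proof. by rewrite subrK addNr. Qed.

Arguments key {n Delta w q F V lam}.

Theorem lemma2p8 (n : nat) (hn : (0 < n)%N)
    (Delta : 'M[C]_n -> 'M[C]_n) (p : 'I_n -> 'M[C]_n)
    (e : 'I_n -> 'I_n -> 'M[C]_n) (i0 j0 : 'I_n) :
  is_weak_2_local_derivation Delta ->
  (forall k, is_minimal_projection (p k)) ->
  (forall k l, k != l -> p k *m p l = 0) ->
  (forall i j, adjmx (e i j) *m e i j = p j /\ e i j *m adjmx (e i j) = p i) ->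
  (forall i j k, e i j *m e j k = e i k) ->
  (forall k, Delta (p k) = 0) ->
  (0 < i0)%N -> (0 < j0)%N ->
  Delta (p (Ordinal hn) + e (Ordinal hn) j0 - e i0 (Ordinal hn)) = 0 ->
  Delta (e i0 j0) = 0.
Proof.
move=> W Hmin Horth Hadj Hmul HD0 Hi0 Hj0 Hb.
set o := Ordinal hn in Hb.
have pp k : p k *m p k = p k := (Hmin k).1.1.
have er i j : e i j *m p j = e i j := pi_lemma (Hadj i j).1 (pp j).
have el i j : p i *m e i j = e i j.
  have := pi_lemma (A := adjmx (e i j)) (P := p i); rewrite adjmxK.
  move=> /(_ (Hadj i j).2 (pp i)) /(congr1 (@adjmx _ _)).
  by rewrite adjmxM adjmxK (Hmin i).1.2.
have eii i : e i i = p i.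
  have h1 := (Hadj i i).1.
  by rewrite -{1}(el i i) -{1}h1 -mulmxA Hmul h1.
have emul i j k l : e i j *m e k l = if j == k then e i l else 0.
  case: eqP => [<-|/eqP ne]; first exact: Hmul.
  by rewrite -(er i j) -(el k l) mulmxA -(mulmxA _ (p j)) Horth // mulmx0 mul0mx.
have HD0' k : Delta (e k k) = 0 by rewrite eii.
rewrite -eii in Hb.
have ao : (i0 == o) = false.
  by apply/eqP => h; move: Hi0; rewrite h.
have co : (j0 == o) = false.
  by apply/eqP => h; move: Hj0; rewrite h.
have oa : (o == i0) = false by rewrite eq_sym.
have oc : (o == j0) = false by rewrite eq_sym.
case: (eqVneq i0 j0) => [<-|ac0]; first by rewrite eii HD0.
have ac : (i0 == j0) = false by apply/negbTE.
have ca : (j0 == i0) = false by rewrite eq_sym.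
set w := e i0 j0.
have S1 : (1%:M - e i0 i0) *m Delta w *m (1%:M - e j0 j0) = 0.
  apply: (key (q := e i0 i0) (lam := 0) W (HD0' i0)).
  - rewrite /w ?scale1r ?scale0r ?subr0 ?mulmxBl ?mulmxBr ?mulmxDl ?mulmxDr ?mul1mx ?mulmx1 ?emul ?eqxx ?ao ?oa ?ac ?ca ?co ?oc /=.
    rewrite ?add0r ?addr0 ?subr0 ?sub0r ?opprD ?opprK ?addrA ?subrr ?add0r ?addr0.
    by rewrite ?zL1 ?zL2 ?addNr.
  - rewrite /w ?scale1r ?scale0r ?subr0 ?mulmxBl ?mulmxBr ?mulmxDl ?mulmxDr ?mul1mx ?mulmx1 ?emul ?eqxx ?ao ?oa ?ac ?ca ?co ?oc /=.
    rewrite ?add0r ?addr0 ?subr0 ?sub0r ?opprD ?opprK ?addrA ?subrr ?add0r ?addr0.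
    by rewrite ?zL1 ?zL2 ?addNr.
have S2 : (1%:M - e i0 i0) *m Delta w *m (e j0 j0 + w) = 0.
  apply: (key (q := e i0 i0) (lam := 1) W (HD0' i0)).
  - rewrite /w ?scale1r ?scale0r ?subr0 ?mulmxBl ?mulmxBr ?mulmxDl ?mulmxDr ?mul1mx ?mulmx1 ?emul ?eqxx ?ao ?oa ?ac ?ca ?co ?oc /=.
    rewrite ?add0r ?addr0 ?subr0 ?sub0r ?opprD ?opprK ?addrA ?subrr ?add0r ?addr0.
    by rewrite ?zL1 ?zL2 ?addNr.
  - rewrite /w ?scale1r ?scale0r ?subr0 ?mulmxBl ?mulmxBr ?mulmxDl ?mulmxDr ?mul1mx ?mulmx1 ?emul ?eqxx ?ao ?oa ?ac ?ca ?co ?oc /=.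
    rewrite ?add0r ?addr0 ?subr0 ?sub0r ?opprD ?opprK ?addrA ?subrr ?add0r ?addr0.
    by rewrite ?zL1 ?zL2 ?addNr.
have S3 : (e i0 i0 + w) *m Delta w *m (1%:M - e j0 j0) = 0.
  apply: (key (q := e j0 j0) (lam := 1) W (HD0' j0)).
  - rewrite /w ?scale1r ?scale0r ?subr0 ?mulmxBl ?mulmxBr ?mulmxDl ?mulmxDr ?mul1mx ?mulmx1 ?emul ?eqxx ?ao ?oa ?ac ?ca ?co ?oc /=.
    rewrite ?add0r ?addr0 ?subr0 ?sub0r ?opprD ?opprK ?addrA ?subrr ?add0r ?addr0.
    by rewrite ?zL1 ?zL2 ?addNr.
  - rewrite /w ?scale1r ?scale0r ?subr0 ?mulmxBl ?mulmxBr ?mulmxDl ?mulmxDr ?mul1mx ?mulmx1 ?emul ?eqxx ?ao ?oa ?ac ?ca ?co ?oc /=.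
    rewrite ?add0r ?addr0 ?subr0 ?sub0r ?opprD ?opprK ?addrA ?subrr ?add0r ?addr0.
    by rewrite ?zL1 ?zL2 ?addNr.
have S4 : (e o o + e o i0 + e o j0) *m Delta w *m (e o o - e j0 o) = 0.
  apply: (key (q := e o o + e o j0 - e i0 o) (lam := 1) W Hb).
  - rewrite /w ?scale1r ?scale0r ?subr0 ?mulmxBl ?mulmxBr ?mulmxDl ?mulmxDr ?mul1mx ?mulmx1 ?emul ?eqxx ?ao ?oa ?ac ?ca ?co ?oc /=.
    rewrite ?add0r ?addr0 ?subr0 ?sub0r ?opprD ?opprK ?addrA ?subrr ?add0r ?addr0.
    by rewrite ?zL1 ?zL2 ?addNr.
  - rewrite /w ?scale1r ?scale0r ?subr0 ?mulmxBl ?mulmxBr ?mulmxDl ?mulmxDr ?mul1mx ?mulmx1 ?emul ?eqxx ?ao ?oa ?ac ?ca ?co ?oc /=.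
    rewrite ?add0r ?addr0 ?subr0 ?sub0r ?opprD ?opprK ?addrA ?subrr ?add0r ?addr0.
    by rewrite ?zL1 ?zL2 ?addNr.
have wF : w *m (1%:M - e i0 i0) = w by rewrite /w mulmxBr mulmx1 emul ca subr0.
have Fw : (1%:M - e j0 j0) *m w = w by rewrite /w mulmxBl mul1mx emul ca subr0.
have T3 : e i0 i0 *m Delta w *m (1%:M - e j0 j0) = 0.
  have wz : w *m Delta w *m (1%:M - e j0 j0) = 0.
    by rewrite -{1}wF -(mulmxA w) -mulmxA S1 mulmx0.
  by move: S3; rewrite !mulmxDl wz addr0.
have T2 : (1%:M - e i0 i0) *m Delta w *m e j0 j0 = 0.
  have wz : (1%:M - e i0 i0) *m Delta w *m w = 0.
    by rewrite -{2}Fw mulmxA S1 mul0mx.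
  by move: S2; rewrite !mulmxDr wz addr0.
have d1 : forall X : 'M[C]_n, X = e i0 i0 *m X + (1%:M - e i0 i0) *m X.
  by move=> X; rewrite mulmxBl mul1mx addrC subrK.
have d2 : forall X : 'M[C]_n, X = X *m e j0 j0 + X *m (1%:M - e j0 j0).
  by move=> X; rewrite mulmxBr mulmx1 addrC subrK.
have Gd : Delta w = e i0 i0 *m Delta w *m e j0 j0.
  rewrite {1}(d1 (Delta w)) {1}(d2 (e i0 i0 *m Delta w)) {1}(d2 ((1%:M - e i0 i0) *m Delta w)).
  by rewrite T3 T2 S1 !addr0.
have FE : (e o o + e o i0 + e o j0) *m e i0 i0 = e o i0.
  by rewrite !mulmxDl !emul eqxx oa ca add0r addr0.
have VE : e j0 j0 *m (e o o - e j0 o) = - e j0 o.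
  by rewrite mulmxBr !emul eqxx co sub0r.
rewrite Gd in S4.
have S4' : e o i0 *m Delta w *m e j0 o = 0.
  move: S4; rewrite !mulmxA FE -(mulmxA _ (e j0 j0)) VE mulmxN.
  by move/eqP; rewrite oppr_eq0 => /eqP.
rewrite Gd -(Hmul i0 o i0) -(Hmul j0 o j0).
have : e i0 o *m (e o i0 *m Delta w *m e j0 o) *m e o j0 = 0.
  by rewrite S4' mulmx0 mul0mx.
by rewrite !mulmxA.
Qed.
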